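(* (i) Let $(\bar x,\bar r)\in\mathbb{R}^n\times\mathbb{R}^2_+$ be a global optimal solution of problem (P2) and suppose $(\bar x,\bar\xi)\in\mathcal{M}(\bar r)$. Then $(\bar x,\bar\lambda)$ with $\bar\lambda:=\bar\xi$ is a global optimal solution of problem (P1). (ii) Suppose there exists a dense subset $\mathbb{D}\subset\mathbb{R}^n\times\mathbb{R}^2_+$ such that $\mathcal{M}(r)\neq\varnothing$ for all $(x,r)\in\mathbb{D}$. Let $(\bar x,\bar\lambda)$ be a global optimal solution of problem (P1) and let $\bar r:=\mathbb{Q}(\bar x)$. Then $(\bar x,\bar r)$ is a global optimal solution of problem (P2).
   Context: Fix $\Psi\in\mathbb{R}^{d\times n}$, linear difference operators $D_1,\dots,D_n$ (matrices with $n$ columns), and $\|x\|_{\mathrm{TV}}:=\sum_{i=1}^n\|D_ix\|_1$. Training data $\Phi_{\mathrm{tr}}\in\mathbb{R}^{m_1\times n}$, $b_{\mathrm{tr}}\in\mathbb{R}^{m_1}$ and validation data $\Phi_{\mathrm{val}}\in\mathbb{R}^{m_2\times n}$, $b_{\mathrm{val}}\in\mathbb{R}^{m_2}$ are given. Let $F(x):=\frac12\|\Phi_{\mathrm{val}}x-b_{\mathrm{val}}\|_2^2$. For $\lambda\in\mathbb{R}^2_+$, $\mathbb{S}_p(\lambda)$ is the set of minimizers over $x\in\mathbb{R}^n$ of $\frac12\|\Phi_{\mathrm{tr}}x-b_{\mathrm{tr}}\|_2^2+\lambda_1\|\Psi x\|_1+\lambda_2\|x\|_{\mathrm{TV}}$;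 for $r\in\mathbb{R}^2_+$, $\mathbb{S}_c(r)$ is the set of minimizers over $x\in\mathbb{R}^n$ of $\frac12\|\Phi_{\mathrm{tr}}x-b_{\mathrm{tr}}\|_2^2$ subject to $\|\Psi x\|_1\le r_1$, $\|x\|_{\mathrm{TV}}\le r_2$. Problem (P1): minimize $F(x)$ over $(x,\lambda)\in\mathbb{R}^n\times\mathbb{R}^2_+$ subject to $x\in\mathbb{S}_p(\lambda)$. Problem (P2): minimize $F(x)$ over $(x,r)\in\mathbb{R}^n\times\mathbb{R}^2_+$ subject to $x\in\mathbb{S}_c(r)$. A global optimal solution is a feasible point whose objective value is $\le$ that of every feasible point. $\mathbb{Q}(x):=(\|\Psi x\|_1,\|x\|_{\mathrm{TV}})\in\mathbb{R}^2_+$. For $r\in\mathbb{R}^2_+$, $\mathcal{M}(r):=\{(x,\xi)\in\mathbb{R}^n\times\mathbb{R}^2_+ : 0\in\Phi_{\mathrm{tr}}^\top(\Phi_{\mathrm{tr}}x-b_{\mathrm{tr}})+\xi_1\Psi^\top\partial\|\cdot\|_1(\Psi x)+\xi_2\sum_{i=1}^n D_i^\top\partial\|\cdot\|_1(D_ix),\ \xi_1(\|\Psi x\|_1-r_1)=0,\ \xi_2(\|x\|_{\mathrm{TV}}-r_2)=0\}$, where $\partial$ is the convex subdifferential. *)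

(* Defs.v *)
From HB Require Import structures.
From mathcomp Require Import all_boot all_order all_algebra.
From mathcomp Require Import reals.
Set Implicit Arguments. Unset Strict Implicit. Unset Printing Implicit Defensive.
Import Order.TTheory GRing.Theory Num.Theory.
Local Open Scope ring_scope.

Section Defs.
Variable R : realType.

Definition norm1 k (v : 'cV[R]_k) : R := \sum_(i < k) `|v i 0|.
Definition sqnorm k (v : 'cV[R]_k) : R := \sum_(i < k) (v i 0) ^+ 2.

Definition subdiff k (f : 'cV[R]_k -> R) (y g : 'cV[R]_k) : Prop :=
  forall z : 'cV[R]_k, f y + (g^T *m (z - y)) 0 0 <= f z.

Definition nonneg2 (a : R * R) : Prop := 0 <= a.1 /\ 0 <= a.2.

Variables (n d m1 m2 : nat) (p : 'I_n -> nat).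
Variables (Psi : 'M[R]_(d, n)) (Dop : forall i : 'I_n, 'M[R]_(p i, n)).
Variables (Phitr : 'M[R]_(m1, n)) (btr : 'cV[R]_m1).
Variables (Phival : 'M[R]_(m2, n)) (bval : 'cV[R]_m2).

Definition TV (x : 'cV[R]_n) : R := \sum_(i < n) norm1 (Dop i *m x).
Definition Fval (x : 'cV[R]_n) : R := 2^-1 * sqnorm (Phival *m x - bval).
Definition LStr (x : 'cV[R]_n) : R := 2^-1 * sqnorm (Phitr *m x - btr).
Definition Qmap (x : 'cV[R]_n) : R * R := (norm1 (Psi *m x), TV x).

Definition objP (lam : R * R) (x : 'cV[R]_n) : R :=
  LStr x + lam.1 * norm1 (Psi *m x) + lam.2 * TV x.
Definition Sp (lam : R * R) (x : 'cV[R]_n) : Prop :=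
  forall y : 'cV[R]_n, objP lam x <= objP lam y.

Definition feasC (r : R * R) (x : 'cV[R]_n) : Prop :=
  norm1 (Psi *m x) <= r.1 /\ TV x <= r.2.
Definition Sc (r : R * R) (x : 'cV[R]_n) : Prop :=
  feasC r x /\ forall y : 'cV[R]_n, feasC r y -> LStr x <= LStr y.

Definition P1_feas (x : 'cV[R]_n) (lam : R * R) : Prop := nonneg2 lam /\ Sp lam x.
Definition P1_opt (x : 'cV[R]_n) (lam : R * R) : Prop :=
  P1_feas x lam /\ forall y mu, P1_feas y mu -> Fval x <= Fval y.
Definition P2_feas (x : 'cV[R]_n) (r : R * R) : Prop := nonneg2 r /\ Sc r x.
Definition P2_opt (x : 'cV[R]_n) (r : R * R) : Prop :=
  P2_feas x r /\ forall y s, P2_feas y s -> Fval x <= Fval y.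

Definition Mset (r : R * R) (x : 'cV[R]_n) (xi : R * R) : Prop :=
  nonneg2 xi /\
  (exists (g : 'cV[R]_d) (h : forall i : 'I_n, 'cV[R]_(p i)),
      subdiff (@norm1 d) (Psi *m x) g /\
      (forall i, subdiff (@norm1 (p i)) (Dop i *m x) (h i)) /\
      Phitr^T *m (Phitr *m x - btr) + xi.1 *: (Psi^T *m g)
        + xi.2 *: (\sum_(i < n) (Dop i)^T *m h i) = 0) /\
  xi.1 * (norm1 (Psi *m x) - r.1) = 0 /\
  xi.2 * (TV x - r.2) = 0.

End Defs.

(* Dset is a dense subset of R^n x R^2_+ (with its usual Euclidean topology;
   entrywise eps-closeness generates the same topology). *)
Definition dense_subset (R : realType) (n : nat)
    (Dset : 'cV[R]_n -> R * R -> Prop) : Prop :=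
  (forall x r, Dset x r -> nonneg2 r) /\
  (forall (x : 'cV[R]_n) (r : R * R), nonneg2 r -> forall eps : R, 0 < eps ->
     exists (x' : 'cV[R]_n) (r' : R * R), Dset x' r' /\
       (forall i, `|x i 0 - x' i 0| < eps) /\
       `|r.1 - r'.1| < eps /\ `|r.2 - r'.2| < eps).

(* Main.v *)
Require Import Defs.
From HB Require Import structures.
From mathcomp Require Import all_boot all_order all_algebra.
From mathcomp Require Import reals.
From mathcomp Require Import ring lra.
Set Implicit Arguments. Unset Strict Implicit. Unset Printing Implicit Defensive.
Import Order.TTheory GRing.Theory Num.Theory.
Local Open Scope ring_scope.

Definition dot (R : realType) n (u v : 'cV[R]_n) : R := \sum_(i < n) u i 0 * v i 0.

Lemma dotDl (R : realType) n (u v w : 'cV[R]_n) : dot (u + v) w = dot u w + dot v w.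
Proof. by rewrite /dot -big_split; apply: eq_bigr => i _; rewrite mxE mulrDl. Qed.
Lemma dotZl (R : realType) n a (u w : 'cV[R]_n) : dot (a *: u) w = a * dot u w.
Proof. by rewrite /dot mulr_sumr; apply: eq_bigr => i _; rewrite mxE mulrA. Qed.
Lemma dotC (R : realType) n (u w : 'cV[R]_n) : dot u w = dot w u.
Proof. by apply: eq_bigr => i _; rewrite mulrC. Qed.
Lemma dot0l (R : realType) n (w : 'cV[R]_n) : dot 0 w = 0.
Proof. by rewrite /dot big1 // => i _; rewrite mxE mul0r. Qed.
Lemma dotNl (R : realType) n (u w : 'cV[R]_n) : dot (- u) w = - dot u w.
Proof. by rewrite -scaleN1r dotZl mulN1r. Qed.
Lemma dotBl (R : realType) n (u v w : 'cV[R]_n) : dot (u - v) w = dot u w - dot v w.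
Proof. by rewrite dotDl dotNl. Qed.
Lemma dotDr (R : realType) n (u v w : 'cV[R]_n) : dot w (u + v) = dot w u + dot w v.
Proof. by rewrite !(dotC w) dotDl. Qed.
Lemma dotZr (R : realType) n a (u w : 'cV[R]_n) : dot w (a *: u) = a * dot w u.
Proof. by rewrite !(dotC w) dotZl. Qed.
Lemma dotBr (R : realType) n (u v w : 'cV[R]_n) : dot w (u - v) = dot w u - dot w v.
Proof. by rewrite !(dotC w) dotBl. Qed.
Lemma dot0r (R : realType) n (w : 'cV[R]_n) : dot w 0 = 0.
Proof. by rewrite dotC dot0l. Qed.

Lemma dot_ge0 (R : realType) n (u : 'cV[R]_n) : 0 <= dot u u.
Proof. by apply: sumr_ge0 => i _; rewrite -expr2 sqr_ge0. Qed.

Lemma dot_eq0 (R : realType) n (u : 'cV[R]_n) : dot u u <= 0 -> u = 0.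
Proof.
move=> h.
have h0 : dot u u = 0 by apply: le_anti; rewrite h dot_ge0.
have H : forall i, u i 0 * u i 0 = 0.
  move=> i; apply: (psumr_eq0P _ h0) => // j _; by rewrite -expr2 sqr_ge0.
apply/matrixP => i j; rewrite (ord1 j) mxE.
by have := H i; move/eqP; rewrite mulf_eq0 orbb => /eqP.
Qed.

Lemma dot_mulmx (R : realType) m n (M : 'M[R]_(m, n)) u h :
  dot u (M *m h) = dot (M^T *m u) h.
Proof.
rewrite /dot.
under eq_bigr do rewrite mxE big_distrr.
rewrite exchange_big; apply: eq_bigr => j _; rewrite mxE big_distrl.
by apply: eq_bigr => i _; rewrite !mxE /=; ring.
Qed.

Lemma trmx_dot (R : realType) n (g v : 'cV[R]_n) : (g^T *m v) 0 0 = dot g v.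
Proof. by rewrite !mxE; apply: eq_bigr => i _; rewrite mxE. Qed.

Lemma sqnorm_dot (R : realType) n (v : 'cV[R]_n) : sqnorm v = dot v v.
Proof. by apply: eq_bigr => i _; rewrite expr2. Qed.

Lemma dot_sum (R : realType) n (I : Type) (r : seq I) (P : pred I) (F : I -> 'cV[R]_n) w :
  dot (\sum_(i <- r | P i) F i) w = \sum_(i <- r | P i) dot (F i) w.
Proof.
by rewrite (big_morph (fun u => dot u w) (fun u v => dotDl u v w) (dot0l w)).
Qed.


From Stdlib Require Import Classical.

Fixpoint cone (R : realType) n (s : seq 'cV[R]_n) (c : 'cV[R]_n) : Prop :=
  match s with
  | [::] => c = 0
  | a :: s' => exists2 t, 0 <= t & cone s' (c - t *: a)
  end.

Lemma cone_cat (R : realType) n (s t : seq 'cV[R]_n) v :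
  cone (s ++ t) v -> exists v1 v2, [/\ cone s v1, cone t v2 & v = v1 + v2].
Proof.
elim: s v => [|a s IH] v /=.
  by move=> h; exists 0, v; rewrite add0r.
case=> t' ht' /IH [v1 [v2 [h1 h2 e]]].
exists (v1 + t' *: a), v2; split => //.
  by exists t' => //; rewrite addrK.
by rewrite addrAC -e subrK.
Qed.

Lemma cone_dot (R : realType) n (s : seq 'cV[R]_n) v d :
  cone s v -> (forall g, g \in s -> dot g d <= 0) -> dot v d <= 0.
Proof.
elim: s v => [|a s IH] v /=.
  by move=> -> _; rewrite dot0l.
case=> t ht hc hs.
have -> : v = (v - t *: a) + t *: a by rewrite subrK.
rewrite dotDl dotZl.
have h1 : dot (v - t *: a) d <= 0.
  by apply: IH => // g gs; apply: hs; rewrite in_cons gs orbT.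
have h2 : t * dot a d <= 0.
  by apply: mulr_ge0_le0 => //; apply: hs; rewrite in_cons eqxx.
lra.
Qed.

Lemma cone_map (R : realType) n (s : seq 'cV[R]_n) (al : R) d a v :
  (forall g, g \in s -> dot g d <= 0) ->
  cone (map (fun g => al *: g - dot g d *: a) s) v ->
  exists2 w, cone s w & v = al *: w - dot w d *: a.
Proof.
elim: s v => [|g s IH] v /=.
  by move=> _ ->; exists 0 => //; rewrite scaler0 dot0l scale0r subr0.
move=> hs [t ht] /IH [].
  by move=> g' g's; apply: hs; rewrite in_cons g's orbT.
move=> w hw e.
exists (w + t *: g).
  by exists t => //; rewrite addrK.
apply/matrixP => i j.
have := congr1 (fun M : 'cV[R]_n => M i j) e; rewrite !mxE dotDl dotZl => e'.
lra.
Qed.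

Lemma farkas_len (R : realType) n k : forall (s : seq 'cV[R]_n), size s = k -> forall c,
  (forall d, (forall g, g \in s -> dot g d <= 0) -> dot c d <= 0) -> cone s c.
Proof.
elim: k => [|k IHk] [|a s] //= hsz c H.
  by apply: dot_eq0; apply: H => g; rewrite in_nil.
case: hsz => hsz.
have IH := IHk s hsz.
case: (classic (forall d, (forall g, g \in s -> dot g d <= 0) -> dot c d <= 0)) => [Hs|Hn].
  by exists 0 => //; rewrite scale0r subr0; apply: IH.
have [d [Hd Hcd]] : exists d, (forall g, g \in s -> dot g d <= 0) /\ 0 < dot c d.
  apply: NNPP => hne; apply: Hn => d hd; rewrite leNgt; apply/negP => hlt.
  by apply: hne; exists d.
set al := dot a d.
have hal : 0 < al.
  rewrite ltNge; apply/negP => hle.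
  have : dot c d <= 0.
    by apply: H => g; rewrite in_cons => /orP [/eqP ->|]; [exact: hle| exact: Hd].
  by rewrite leNgt Hcd.
have haln : al != 0 by rewrite gt_eqF.
have Hc' := IHk [seq al *: g - dot g d *: a | g <- s] (etrans (size_map _ _) hsz) (al *: c - dot c d *: a).
have [w hw e] : exists2 w, cone s w & al *: c - dot c d *: a = al *: w - dot w d *: a.
  apply: (cone_map Hd); apply: Hc' => d' hd'.
  set d'' := d' - (dot a d' / al) *: d.
  have key : dot c d'' <= 0.
    apply: H => g; rewrite in_cons => /orP [/eqP ->|gs].
      rewrite /d'' dotBr dotZr -/al mulfVK //; lra.
    have hf := hd' _ (map_f (fun g => al *: g - dot g d *: a) gs).
    rewrite dotBl !dotZl in hf.
    have -> : dot g d'' = (al * dot g d' - dot g d * dot a d') / al.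
      by rewrite /d'' dotBr dotZr; field.
    by rewrite ler_pdivrMr // mul0r.
  move: key; rewrite /d'' dotBr dotZr => key.
  rewrite dotBl !dotZl.
  have : (al * dot c d' - dot c d * dot a d') / al <= 0.
    by rewrite [X in X <= _](_ : _ = dot c d' - dot a d' / al * dot c d) //; field.
  by rewrite ler_pdivrMr // mul0r.
have hwd : dot w d <= 0 by apply: (cone_dot hw Hd).
exists ((dot c d - dot w d) / al).
  by apply: divr_ge0 => //; lra.
suff -> : c - ((dot c d - dot w d) / al) *: a = w by []. apply/matrixP => i j.
have := congr1 (fun M : 'cV[R]_n => M i j) e; rewrite !mxE => e'.
apply: (mulfI haln).
have -> : al * w i j = al * c i j - dot c d * a i j + dot w d * a i j by lra.
by field.
Qed.

Lemma farkas (R : realType) n (s : seq 'cV[R]_n) c :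
  (forall d, (forall g, g \in s -> dot g d <= 0) -> dot c d <= 0) -> cone s c.
Proof. exact: (farkas_len (erefl _)). Qed.

Definition pwl (R : realType) n (f : 'cV[R]_n -> R) (L : seq 'cV[R]_n) : Prop :=
  (forall a, a \in L -> forall x, dot a x <= f x) /\
  (forall x, exists2 a, a \in L & dot a x = f x).

Lemma pwl_ext (R : realType) n (f g : 'cV[R]_n -> R) L :
  (forall x, f x = g x) -> pwl f L -> pwl g L.
Proof.
move=> e [h1 h2]; split.
  by move=> a aL x; rewrite -e; apply: h1.
by move=> x; have [a aL ea] := h2 x; exists a => //; rewrite -e.
Qed.

Lemma pwl_add (R : realType) n (f g : 'cV[R]_n -> R) L1 L2 :
  pwl f L1 -> pwl g L2 -> pwl (fun x => f x + g x) [seq a + b | a <- L1, b <- L2].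
Proof.
move=> [f1 f2] [g1 g2]; split.
  move=> a' /allpairsP [[a b] [/= aL bL ->]] x.
  by rewrite dotDl lerD // ?f1 ?g1.
move=> x; have [a aL ea] := f2 x; have [b bL eb] := g2 x.
by exists (a + b); [apply: allpairs_f | rewrite dotDl ea eb].
Qed.

Lemma pwl_sum (R : realType) n (I : Type) (r : seq I) (P : pred I)
  (F : I -> 'cV[R]_n -> R) :
  (forall i, exists L, pwl (F i) L) ->
  exists L, pwl (fun x => \sum_(i <- r | P i) F i x) L.
Proof.
move=> hF; elim: r => [|i r [L hL]].
  exists [:: 0]; split.
    by move=> a; rewrite inE => /eqP -> x; rewrite dot0l big_nil.
  by move=> x; exists 0; rewrite ?inE ?dot0l ?big_nil.
case hP : (P i).
  have [L' hL'] := hF i.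
  exists [seq a + b | a <- L', b <- L].
  apply: (pwl_ext _ (pwl_add hL' hL)) => x; by rewrite big_cons hP.
by exists L; apply: (pwl_ext _ hL) => x; rewrite big_cons hP.
Qed.

Lemma pwl_abs (R : realType) n (r : 'cV[R]_n) :
  pwl (fun x => `|dot r x|) [:: r; -r].
Proof.
split.
  move=> a; rewrite !inE => /orP [] /eqP -> x.
    exact: ler_norm.
  by rewrite dotNl -normrN ler_norm.
move=> x; case: (leP 0 (dot r x)) => h.
  by exists r; rewrite ?inE ?eqxx // ger0_norm.
by exists (- r); rewrite ?inE ?eqxx ?orbT // dotNl ltr0_norm.
Qed.

Lemma pwl_norm1 (R : realType) m n (M : 'M[R]_(m, n)) :
  exists L, pwl (fun x => norm1 (M *m x)) L.
Proof.
have [L hL] := @pwl_sum R n _ (index_enum 'I_m) xpredT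
  (fun i x => `|dot (row i M)^T x|) (fun i => ex_intro _ _ (pwl_abs _)).
exists L; apply: (pwl_ext _ hL) => x.
rewrite /norm1; apply: eq_bigr => i _; congr `|_|.
by rewrite !mxE; apply: eq_bigr => j _; rewrite !mxE.
Qed.

Lemma small_eps (R : realType) (T : eqType) (L : seq T) (u v : T -> R) :
  exists2 e, 0 < e & forall a, a \in L -> u a < 0 -> u a + e * `|v a| <= 0.
Proof.
elim: L => [|b L [e he H]].
  by exists 1 => // a; rewrite in_nil.
case: (ltP (u b) 0) => hb.
  set k := - u b / (`|v b| + 1).
  have hw : 0 < `|v b| + 1 by rewrite ltr_wpDl.
  have hk : 0 < k by rewrite divr_gt0 // oppr_gt0.
  exists (Order.min e k); first by rewrite lt_min he hk.
  have hme : Order.min e k <= e by rewrite ge_min lexx.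
  have hmk : Order.min e k <= k by rewrite ge_min lexx orbT.
  have hm0 : 0 <= Order.min e k by rewrite le_min !ltW.
  move=> a; rewrite in_cons => /orP [/eqP ->|aL] ha.
    have h1 : Order.min e k * (`|v b| + 1) <= - u b by rewrite -ler_pdivlMr.
    have h2 : 0 <= Order.min e k * 1 by rewrite mulr1.
    move: h1; rewrite mulrDr => h1; lra.
  have h1 := H a aL ha.
  have h2 : Order.min e k * `|v a| <= e * `|v a| by rewrite ler_wpM2r.
  lra.
exists e => // a; rewrite in_cons => /orP [/eqP ->|aL] ha; last exact: H.
by move: hb; rewrite leNgt ha.
Qed.

Lemma cone_bound (R : realType) n (s : seq 'cV[R]_n) v f y r :
  cone s v -> (forall a, a \in s -> (forall x, dot a x <= f x) /\ dot a y = r) ->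
  exists2 l, 0 <= l & (forall x, dot v x <= l * f x) /\ dot v y = l * r.
Proof.
elim: s v => [|a s IH] v /=.
  by move=> -> _; exists 0 => //; split => [x|]; rewrite dot0l mul0r.
case=> t ht hc hs.
have [l hl [h1 h2]] := IH _ hc (fun g gs => hs g (@mem_behead _ (a :: s) g gs)).
have [ha1 ha2] := hs a (mem_head _ _).
exists (l + t); first by rewrite addr_ge0.
have ev : v = (v - t *: a) + t *: a by rewrite subrK.
split.
  move=> x; rewrite ev dotDl dotZl.
  have := h1 x; have := ha1 x => q1 q2.
  have q3 : t * dot a x <= t * f x by rewrite ler_wpM2l.
  lra.
by rewrite ev dotDl dotZl h2 ha2; ring.
Qed.

Lemma lp_kkt (R : realType) n (f1 f2 : 'cV[R]_n -> R) L1 L2 (c y : 'cV[R]_n) s1 s2 :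
  pwl f1 L1 -> pwl f2 L2 -> f1 y <= s1 -> f2 y <= s2 ->
  (forall z, f1 z <= s1 -> f2 z <= s2 -> dot c y <= dot c z) ->
  exists l1 l2, [/\ 0 <= l1, 0 <= l2 &
    forall z, dot c y + l1 * f1 y + l2 * f2 y <= dot c z + l1 * f1 z + l2 * f2 z].
Proof.
move=> [p11 p12] [p21 p22] hy1 hy2 hopt.
set A1 := [seq a <- L1 | dot a y == s1].
set A2 := [seq a <- L2 | dot a y == s2].
have hcone : cone (A1 ++ A2) (- c).
  apply: farkas => d hd; rewrite dotNl oppr_le0.
  have [e he H] := small_eps
    ([seq (a, s1) | a <- L1] ++ [seq (a, s2) | a <- L2])
    (fun q => dot q.1 y - q.2) (fun q => dot q.1 d).
  have gen : forall (f : 'cV[R]_n -> R) (L : seq 'cV[R]_n) (s : R),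
      (forall a, a \in L -> forall x, dot a x <= f x) ->
      (forall x, exists2 a, a \in L & dot a x = f x) -> f y <= s ->
      (forall a, a \in L -> dot a y = s -> dot a d <= 0) ->
      (forall a, a \in L -> dot a y - s < 0 -> dot a y - s + e * `|dot a d| <= 0) ->
      f (y + e *: d) <= s.
    move=> f L s q1 q2 hfy hA hE.
    have [a aL ea] := q2 (y + e *: d); rewrite -ea.
    rewrite dotDr dotZr.
    have hay : dot a y <= s by apply: le_trans (q1 a aL y) hfy.
    case: (eqVneq (dot a y) s) => hs.
      have hd0 := hA a aL hs.
      have : e * dot a d <= 0 by rewrite mulr_ge0_le0 // ltW.
      lra.
    have hlt : dot a y - s < 0 by rewrite subr_lt0 lt_neqAle hs hay.
    have h1 := hE a aL hlt.
    have h2 : e * dot a d <= e * `|dot a d| by apply: ler_wpM2l; [exact: ltW | exact: ler_norm].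
    lra.
  have hz1 : f1 (y + e *: d) <= s1.
    apply: (gen _ L1) => // a aL.
      move=> hs; apply: hd; rewrite mem_cat mem_filter hs eqxx aL //.
    move=> ha; apply: (H (a, s1)) => //.
    by rewrite mem_cat; apply/orP; left; apply: map_f.
  have hz2 : f2 (y + e *: d) <= s2.
    apply: (gen _ L2) => // a aL.
      move=> hs; apply: hd; rewrite mem_cat !mem_filter hs eqxx aL orbT //.
    move=> ha; apply: (H (a, s2)) => //.
    by rewrite mem_cat; apply/orP; right; apply: map_f.
  have := hopt _ hz1 hz2; rewrite dotDr dotZr => h.
  have : 0 <= e * dot c d by lra.
  by rewrite pmulr_rge0.
have [v1 [v2 [hv1 hv2 ev]]] := cone_cat hcone.
have [l1 hl1 [b1 e1]] : exists2 l, 0 <= l & (forall x, dot v1 x <= l * f1 x) /\ dot v1 y = l * s1.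
  apply: (cone_bound hv1) => a.
  by rewrite mem_filter => /andP [/eqP h aL]; split => //; apply: p11.
have [l2 hl2 [b2 e2]] : exists2 l, 0 <= l & (forall x, dot v2 x <= l * f2 x) /\ dot v2 y = l * s2.
  apply: (cone_bound hv2) => a.
  by rewrite mem_filter => /andP [/eqP h aL]; split => //; apply: p21.
exists l1, l2; split => // z.
have hc : forall x, dot c x = - dot v1 x - dot v2 x.
  by move=> x; rewrite -[c]opprK ev dotNl dotDl opprD.
rewrite !hc.
have := b1 z; have := b2 z => q1 q2.
have q3 : l1 * f1 y <= l1 * s1 by rewrite ler_wpM2l.
have q4 : l2 * f2 y <= l2 * s2 by rewrite ler_wpM2l.
lra.
Qed.

Lemma dot_sq (R : realType) n (u w : 'cV[R]_n) :
  dot (u + w) (u + w) = dot u u + dot u w + dot u w + dot w w.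
Proof. by rewrite dotDl !dotDr (dotC w u) !addrA. Qed.

Lemma LStr_expand (R : realType) n m1 (Phitr : 'M[R]_(m1, n)) btr (y z : 'cV[R]_n) :
  LStr Phitr btr z = LStr Phitr btr y + dot (Phitr^T *m (Phitr *m y - btr)) (z - y)
    + 2^-1 * dot (Phitr *m (z - y)) (Phitr *m (z - y)).
Proof.
rewrite /LStr !sqnorm_dot.
have -> : Phitr *m z - btr = (Phitr *m y - btr) + Phitr *m (z - y).
  rewrite mulmxBr; set A := Phitr *m z; set B := Phitr *m y; apply/matrixP => i j; rewrite !mxE; ring.
rewrite -dot_mulmx dot_sq.
by field.
Qed.

Lemma LStr_lb (R : realType) n m1 (Phitr : 'M[R]_(m1, n)) btr (y z : 'cV[R]_n) :
  LStr Phitr btr y + dot (Phitr^T *m (Phitr *m y - btr)) (z - y) <= LStr Phitr btr z.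
Proof.
rewrite (LStr_expand Phitr btr y z).
have := dot_ge0 (Phitr *m (z - y)) => h.
have : 0 <= 2^-1 * dot (Phitr *m (z - y)) (Phitr *m (z - y)) :> R.
  by rewrite mulr_ge0 // invr_ge0.
lra.
Qed.

Lemma lim_ge0 (R : realType) (g q : R) : 0 <= q ->
  (forall e, 0 < e -> e <= 1 -> 0 <= g + e * q) -> 0 <= g.
Proof.
move=> hq H; case: (leP 0 g) => // hg.
have hqg : 0 < q - g by lra.
set e := - g / (q - g).
have he : 0 < e by rewrite divr_gt0 // oppr_gt0.
have he1 : e <= 1 by rewrite ler_pdivrMr // mul1r; lra.
have hee : e * (q - g) = - g by rewrite divfK // gt_eqF.
have h := H e he he1.
have := mulr_ge0 h (ltW hqg).
nra.
Qed.

Lemma pwl_convex (R : realType) n (f : 'cV[R]_n -> R) L y z e :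
  pwl f L -> 0 <= e -> e <= 1 -> f (y + e *: (z - y)) <= (1 - e) * f y + e * f z.
Proof.
move=> [h1 h2] he0 he1.
have [a aL <-] := h2 (y + e *: (z - y)).
rewrite dotDr dotZr dotBr.
have q1 := h1 a aL y; have q2 := h1 a aL z.
have q3 : (1 - e) * dot a y <= (1 - e) * f y by rewrite ler_wpM2l // subr_ge0.
have q4 : e * dot a z <= e * f z by rewrite ler_wpM2l.
lra.
Qed.

Lemma norm1_ge0 (R : realType) k (v : 'cV[R]_k) : 0 <= norm1 v.
Proof. by apply: sumr_ge0 => i _; rewrite normr_ge0. Qed.

Lemma TV_ge0 (R : realType) n (p : 'I_n -> nat) (Dop : forall i, 'M[R]_(p i, n)) x :
  0 <= TV Dop x.
Proof. by apply: sumr_ge0 => i _; rewrite norm1_ge0. Qed.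

Lemma pwl_TV (R : realType) n (p : 'I_n -> nat) (Dop : forall i, 'M[R]_(p i, n)) :
  exists L, pwl (TV Dop) L.
Proof.
have [L hL] := @pwl_sum R n _ (index_enum 'I_n) xpredT
  (fun i x => norm1 (Dop i *m x)) (fun i => pwl_norm1 (Dop i)).
by exists L; apply: (pwl_ext _ hL).
Qed.

Lemma sp_of_mset (R : realType) (n d m1 : nat) (p : 'I_n -> nat)
  (Psi : 'M[R]_(d, n)) (Dop : forall i : 'I_n, 'M[R]_(p i, n))
  (Phitr : 'M[R]_(m1, n)) (btr : 'cV[R]_m1) r x xi :
  Mset Psi Dop Phitr btr r x xi -> Sp Psi Dop Phitr btr xi x.
Proof.
move=> [[hx1 hx2] [[g [h [hg [hh hst]]]] _]] z.
rewrite /objP.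
set G := Phitr^T *m (Phitr *m x - btr).
have hL := LStr_lb Phitr btr x z.
have hN : norm1 (Psi *m x) + dot (Psi^T *m g) (z - x) <= norm1 (Psi *m z).
  by have := hg (Psi *m z); rewrite trmx_dot -mulmxBr dot_mulmx.
have hT : TV Dop x + dot (\sum_(i < n) (Dop i)^T *m h i) (z - x) <= TV Dop z.
  rewrite /TV dot_sum -big_split; apply: ler_sum => i _.
  by have := hh i (Dop i *m z); rewrite trmx_dot -mulmxBr dot_mulmx.
have hs0 := congr1 (fun v => dot v (z - x)) hst.
rewrite /= !dotDl !dotZl dot0l in hs0.
have q1 := ler_wpM2l hx1 hN; have q2 := ler_wpM2l hx2 hT.
rewrite !mulrDr in q1 q2.
lra.
Qed.


Lemma sc_of_sp (R : realType) (n d m1 : nat) (p : 'I_n -> nat)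
  (Psi : 'M[R]_(d, n)) (Dop : forall i : 'I_n, 'M[R]_(p i, n))
  (Phitr : 'M[R]_(m1, n)) (btr : 'cV[R]_m1) mu y :
  nonneg2 mu -> Sp Psi Dop Phitr btr mu y ->
  nonneg2 (Qmap Psi Dop y) /\ Sc Psi Dop Phitr btr (Qmap Psi Dop y) y.
Proof.
move=> [hm1 hm2] hsp; split.
  by split; [exact: norm1_ge0 | exact: TV_ge0].
split; first by split.
move=> z [/= hz1 hz2].
have := hsp z; rewrite /objP.
have := ler_wpM2l hm1 hz1; have := ler_wpM2l hm2 hz2.
lra.
Qed.

Lemma sp_of_sc (R : realType) (n d m1 : nat) (p : 'I_n -> nat)
  (Psi : 'M[R]_(d, n)) (Dop : forall i : 'I_n, 'M[R]_(p i, n))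
  (Phitr : 'M[R]_(m1, n)) (btr : 'cV[R]_m1) s y :
  Sc Psi Dop Phitr btr s y -> exists mu, nonneg2 mu /\ Sp Psi Dop Phitr btr mu y.
Proof.
move=> [[hy1 hy2] hopt].
have [L1 hL1] := pwl_norm1 Psi.
have [L2 hL2] := pwl_TV Dop.
set G := Phitr^T *m (Phitr *m y - btr).
have stepA : forall z, norm1 (Psi *m z) <= s.1 -> TV Dop z <= s.2 -> dot G y <= dot G z.
  move=> z hz1 hz2; rewrite -subr_ge0 -dotBr.
  have hq : 0 <= 2^-1 * dot (Phitr *m (z - y)) (Phitr *m (z - y)) :> R.
    by rewrite mulr_ge0 ?invr_ge0 ?dot_ge0.
  apply: (lim_ge0 hq) => e he he1.
  set z' := y + e *: (z - y).
  have c1 := @pwl_convex R n _ L1 y z e hL1 (ltW he) he1.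
  have c2 := @pwl_convex R n _ L2 y z e hL2 (ltW he) he1.
  have f1 : norm1 (Psi *m z') <= s.1.
    have := ler_wpM2l (ltW he) hz1.
    have : (1 - e) * norm1 (Psi *m y) <= (1 - e) * s.1 by rewrite ler_wpM2l // subr_ge0.
    rewrite /z'; lra.
  have f2 : TV Dop z' <= s.2.
    have := ler_wpM2l (ltW he) hz2.
    have : (1 - e) * TV Dop y <= (1 - e) * s.2 by rewrite ler_wpM2l // subr_ge0.
    rewrite /z'; lra.
  have := hopt z' (conj f1 f2).
  rewrite (LStr_expand Phitr btr y z') -/G.
  have -> : z' - y = e *: (z - y) by rewrite /z' addrAC subrr add0r.
  rewrite -scalemxAr dotZr !dotZl dotZr => h.
  rewrite -(pmulr_rge0 _ he).
  have -> : e * (dot G (z - y) + e * (2^-1 * dot (Phitr *m (z - y)) (Phitr *m (z - y))))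
    = e * dot G (z - y) + 2^-1 * (e * (e * dot (Phitr *m (z - y)) (Phitr *m (z - y)))) by ring.
  lra.
have [l1 [l2 [hl1 hl2 H]]] := lp_kkt hL1 hL2 hy1 hy2 stepA.
exists (l1, l2); split => //.
move=> z; rewrite /objP /=.
have := H z; have := LStr_lb Phitr btr y z; rewrite dotBr -/G.
lra.
Qed.

Theorem mainTheorem3 (R : realType) (n d m1 m2 : nat) (p : 'I_n -> nat)
  (Psi : 'M[R]_(d, n)) (Dop : forall i : 'I_n, 'M[R]_(p i, n))
  (Phitr : 'M[R]_(m1, n)) (btr : 'cV[R]_m1)
  (Phival : 'M[R]_(m2, n)) (bval : 'cV[R]_m2) :
  (* (i) *)
  (forall (xbar : 'cV[R]_n) (rbar xibar : R * R),
     P2_opt Psi Dop Phitr btr Phival bval xbar rbar ->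
     Mset Psi Dop Phitr btr rbar xbar xibar ->
     P1_opt Psi Dop Phitr btr Phival bval xbar xibar) /\
  (* (ii) *)
  (forall Dset : 'cV[R]_n -> R * R -> Prop,
     dense_subset Dset ->
     (forall x r, Dset x r -> exists x' xi, Mset Psi Dop Phitr btr r x' xi) ->
     forall (xbar : 'cV[R]_n) (lbar : R * R),
       P1_opt Psi Dop Phitr btr Phival bval xbar lbar ->
       P2_opt Psi Dop Phitr btr Phival bval xbar (Qmap Psi Dop xbar)).
Proof.
split.
  move=> xbar rbar xibar [_ hopt] hM.
  split.
    by split; [case: hM | exact: (sp_of_mset hM)].
  move=> y mu [hmu hsp].
  apply: (hopt y (Qmap Psi Dop y)).
  exact: (sc_of_sp hmu hsp).
move=> Dset _ _ xbar lbar [[hl hsp] hopt].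
split; first exact: (sc_of_sp hl hsp).
move=> y s [_ hsc].
have [mu [hmu hsp']] := sp_of_sc hsc.
exact: (hopt y mu (conj hmu hsp')).
Qed.
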